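(* Let $\varepsilon>0$ be a real and $\ell\geq2$ an integer. There exists $t_0$ such that for every integer $t\geq t_0$ there is a constant $c>0$ such that for all positive integers $m\leq n$: if $\ell$ is odd then $z(m,n,\theta_{t,\ell})\geq c\, m^{\frac{\ell+1}{2\ell}-\varepsilon} n^{\frac{\ell+1}{2\ell}-\varepsilon}$, and if $\ell$ is even then $z(m,n,\theta_{t,\ell})\geq c\, m^{\frac12+\frac1\ell-\varepsilon} n^{\frac12-\varepsilon}$.
   Context: For integers $t,\ell\geq2$, the theta graph $\theta_{t,\ell}$ consists of $t$ internally vertex-disjoint paths of length $\ell$ between two fixed vertices. $z(m,n,F)$ is the maximum number of edges in a bipartite graph with parts of sizes $m$ and $n$ containing no copy of $F$ as a subgraph. *)

(* Defs.v *)
From Stdlib Require Import Reals.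
From mathcomp Require Import all_boot.

Set Implicit Arguments.
Unset Strict Implicit.
Unset Printing Implicit Defensive.

Definition bip_adj (m n : nat) (E : {set 'I_m * 'I_n})
    (u v : 'I_m + 'I_n) : bool :=
  match u, v with
  | inl a, inr b => (a, b) \in E
  | inr b, inl a => (a, b) \in E
  | _, _ => false
  end.

(* The theta graph theta_{t,l}: vertices are labelled (i, j) with i < t the
   index of the path and j <= l the position on it; all paths share the
   endpoint x = (i,0) and y = (i,l).  A copy of theta_{t,l} in the graph is an
   injective edge-preserving map of the vertices of theta_{t,l}, encoded by
   g : 'I_t -> 'I_l.+1 -> V such that
   - all paths start at the same vertex and end at the same vertex,
   - consecutive vertices on each path are adjacent,
   - g (i,j) = g (i',j') only when (i,j),(i',j') are the same vertex of
     theta_{t,l}, i.e. j = j' and (i = i' or j is an endpoint index). *)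
Definition is_theta_copy (m n t l : nat) (E : {set 'I_m * 'I_n})
    (g : {ffun 'I_t -> {ffun 'I_l.+1 -> 'I_m + 'I_n}}) : bool :=
  [&& [forall i : 'I_t, forall i' : 'I_t,
         (g i ord0 == g i' ord0) && (g i ord_max == g i' ord_max)],
      [forall i : 'I_t, forall j : 'I_l.+1, forall j' : 'I_l.+1,
         ((val j').+1 == val j) ==> bip_adj E (g i j') (g i j)] &
      [forall i : 'I_t, forall i' : 'I_t, forall j : 'I_l.+1, forall j' : 'I_l.+1,
         (g i j == g i' j') ==>
         ((j == j') && [|| i == i', val j == 0 | val j == l])]].

Definition has_theta (m n t l : nat) (E : {set 'I_m * 'I_n}) : bool :=
  [exists g : {ffun 'I_t -> {ffun 'I_l.+1 -> 'I_m + 'I_n}},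
     is_theta_copy E g].

Definition z_theta (m n t l : nat) : nat :=
  \max_(E : {set 'I_m * 'I_n} | ~~ has_theta t l E) #|E|.

(* Main.v *)
Require Import Defs.
From Stdlib Require Import Reals Lra ZArith Lia.
From mathcomp Require Import all_boot zify.
Set Implicit Arguments.
Unset Strict Implicit.
Unset Printing Implicit Defensive.

Lemma card_bigcup_le (I T : finType) (P : pred I) (F : I -> {set T}) :
  #|\bigcup_(i | P i) F i| <= \sum_(i | P i) #|F i|.
Proof.
apply: (big_ind2 (fun (A : {set T}) k => #|A| <= k)).
- by rewrite cards0.
- move=> A1 n1 A2 n2 h1 h2; rewrite cardsU.
  apply: leq_trans (leq_subr _ _) _; exact: leq_add.
- by [].
Qed.

Section Comb.
Variables (m n t l : nat).
Local Notation V := ('I_m + 'I_n)%type.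
Local Notation T := ('I_m * 'I_n)%type.
Local Notation GT := {ffun 'I_t -> {ffun 'I_l.+1 -> V}}.

Definition ep (u v : V) : {set T} :=
  match u, v with
  | inl a, inr b => [set (a, b)]
  | inr b, inl a => [set (a, b)]
  | _, _ => set0
  end.

Lemma card_ep u v : #|ep u v| <= 1.
Proof. by case: u; case: v => * //=; rewrite ?cards1 ?cards0. Qed.

Lemma bip_adj_ep (E : {set T}) u v :
  bip_adj E u v -> exists e, e \in E /\ ep u v = [set e].
Proof. by case: u; case: v => //= a b H; exists (b, a) + exists (a, b). Qed.

Lemma ep_bip_adj (E : {set T}) u v e : ep u v = [set e] -> e \in E -> bip_adj E u v.
Proof.
case: u => [a|b]; case: v => [a'|b'] /= H;
  try (by move/setP/(_ e): H; rewrite !inE eqxx).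
- by move/setP/(_ (a, b')): H; rewrite !inE eqxx => /esym/eqP <-.
- by move/setP/(_ (a', b)): H; rewrite !inE eqxx => /esym/eqP <-.
Qed.

Lemma bip_adj_mono (E F : {set T}) u v :
  E \subset F -> bip_adj E u v -> bip_adj F u v.
Proof. by move=> /subsetP sEF; case: u; case: v => //= a b /sEF. Qed.

Lemma theta_mono (E F : {set T}) (g : GT) :
  E \subset F -> is_theta_copy E g -> is_theta_copy F g.
Proof.
move=> sEF /and3P[h1 /forallP h2 h3]; apply/and3P; split=> //.
apply/forallP=> i; apply/forallP=> j; apply/forallP=> j'.
have /forallP/(_ j)/forallP/(_ j') := h2 i.
move=> /implyP hh; apply/implyP => hj; apply: bip_adj_mono sEF _; exact: hh.
Qed.

Definition copies (E : {set T}) := [set g : GT | is_theta_copy E g].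

Hypotheses (ht : 0 < t) (hl : 0 < l).
Definition i0 : 'I_t := Ordinal ht.
Definition j1 : 'I_l.+1 := @Ordinal l.+1 1 hl.

Lemma deletion (E : {set T}) : #|E| - #|copies E| <= z_theta m n t l.
Proof.
set R := \bigcup_(g in copies E) ep (g i0 ord0) (g i0 j1).
have cR : #|R| <= #|copies E|.
  apply: leq_trans (card_bigcup_le _ _) _.
  rewrite -sum1_card; apply: leq_sum => g _; exact: card_ep.
have cE : #|E| - #|copies E| <= #|E :\: R|.
  rewrite cardsD; apply: leq_sub2l; apply: leq_trans cR.
  by apply: subset_leq_card; apply: subsetIr.
apply: leq_trans cE _; rewrite /z_theta.
apply: (@leq_bigmax_cond _ (fun E0 : {set T} => ~~ has_theta t l E0) (fun E0 => #|E0|)).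
apply/existsP => -[g Hg].
have HgE := theta_mono (subsetDl E R) Hg.
case/and3P: Hg => _ /forallP /(_ i0) /forallP /(_ j1) /forallP /(_ ord0) /= H _.
have [e [eE' hep]] := bip_adj_ep H.
have eR : e \in R.
  apply/bigcupP; exists g; first by rewrite inE.
  by rewrite hep set11.
by move: eE'; rewrite inE eR.
Qed.
End Comb.

Lemma single_edge (m n : nat) (e : 'I_m * 'I_n) (u v w : 'I_m + 'I_n) :
  bip_adj [set e] u v -> bip_adj [set e] v w -> u = w.
Proof.
case: u => [a|b]; case: v => [a'|b']; case: w => [a''|b''] //=; rewrite !inE.
all: move=> /eqP h1 /eqP h2; rewrite -h2 in h1; case: h1 => *; subst; done.
Qed.

Lemma z_ge1 (m n t l : nat) : 0 < m -> 0 < n -> 0 < t -> 1 < l -> 1 <= z_theta m n t l.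
Proof.
move=> hm hn ht hl.
pose E : {set 'I_m * 'I_n} := [set (Ordinal hm, Ordinal hn)].
have -> : 1 = #|E| by rewrite cards1.
apply: (@leq_bigmax_cond _ (fun E0 : {set _} => ~~ has_theta t l E0) (fun E0 => #|E0|)).
apply/existsP => -[g /and3P[_ /forallP h2 /forallP h3]].
pose j2 : 'I_l.+1 := @Ordinal l.+1 2 hl.
have hl0 : 0 < l by apply: ltnW.
have H1 := h2 (i0 ht); move/forallP: H1 => /(_ (j1 hl0)) /forallP /(_ ord0) /= H1.
have H2 := h2 (i0 ht); move/forallP: H2 => /(_ j2) /forallP /(_ (j1 hl0)) /= H2.
have := single_edge H1 H2.
move/eqP; move: (h3 (i0 ht)) => /forallP /(_ (i0 ht)) /forallP /(_ ord0) /forallP /(_ j2).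
by move=> /implyP hh /hh /andP[].
Qed.

Section Edges.
Variables (m n t l : nat).
Local Notation V := ('I_m + 'I_n)%type.
Local Notation T := ('I_m * 'I_n)%type.
Local Notation GT := {ffun 'I_t -> {ffun 'I_l.+1 -> V}}.

Definition wd (j : 'I_l) : 'I_l.+1 := widen_ord (leqnSn l) j.
Definition sc (j : 'I_l) : 'I_l.+1 := lift ord0 j.

Lemma scE j : nat_of_ord (sc j) = j.+1. Proof.  by rewrite /sc /= /bump add1n. Qed.
Lemma wdE j : nat_of_ord (wd j) = j. Proof. by []. Qed.

Definition Sg (g : GT) : {set T} :=
  \bigcup_(p : 'I_t * 'I_l) ep (g p.1 (wd p.2)) (g p.1 (sc p.2)).

Lemma ep_sub (E : {set T}) u v : bip_adj E u v -> ep u v \subset E.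
Proof. by move=> /bip_adj_ep [e [eE ->]]; rewrite sub1set. Qed.

Lemma copiesE (E : {set T}) :
  copies t l E = [set g in copies t l setT | Sg g \subset E].
Proof.
apply/setP => g; rewrite !inE; apply/idP/andP.
  move=> H; split; first exact: theta_mono (subsetT E) H.
  apply/bigcupsP => -[i j] _ /=; apply: ep_sub.
  case/and3P: H => _ /forallP /(_ i) /forallP /(_ (sc j)) /forallP /(_ (wd j)) /=.
  by rewrite /wd /sc /= => hh _; apply: (implyP hh); rewrite /bump add1n.
move=> [/and3P[h1 /forallP h2 h3] hS]; apply/and3P; split=> //.
apply/forallP=> i; apply/forallP=> j; apply/forallP=> j'; apply/implyP=> /eqP hj.
have := h2 i => /forallP /(_ j) /forallP /(_ j') /implyP; rewrite hj eqxx => /(_ isT).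
move=> /bip_adj_ep [e [_ hep]].
have jl : j' < l by move: (ltn_ord j); rewrite -hj ltnS.
have ej : e \in Sg g.
  apply/bigcupP; exists (i, Ordinal jl) => //=.
  have -> : wd (Ordinal jl) = j' by apply: val_inj.
  have -> : sc (Ordinal jl) = j by apply: val_inj; rewrite /sc /= /bump add1n.
  by rewrite hep set11.
by apply: (ep_bip_adj hep); apply: (subsetP hS).
Qed.

Lemma ep_mem2 (u v u' v' : V) e : e \in ep u v -> e \in ep u' v' ->
  (u = u' /\ v = v') \/ (u = v' /\ v = u').
Proof.
case: u => [a|b]; case: v => [a1|b1]; case: u' => [a2|b2]; case: v' => [a3|b3];
  rewrite /= ?inE //; move=> /eqP h1 /eqP h2; rewrite h2 in h1; case: h1 => *; subst;
  by [left | right].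
Qed.

Hypothesis hl : 1 < l.

Lemma card_Sg (g : GT) : g \in copies t l setT -> t * l <= #|Sg g|.
Proof.
rewrite inE => /and3P[_ /forallP h2 /forallP h3].
have adj p : bip_adj setT (g p.1 (wd p.2)) (g p.1 (sc p.2)).
  have := h2 p.1 => /forallP /(_ (sc p.2)) /forallP /(_ (wd p.2)) /implyP; apply.
  by change ((nat_of_ord (wd p.2)).+1 == nat_of_ord (sc p.2)); rewrite scE wdE.
have disj p q e : e \in ep (g p.1 (wd p.2)) (g p.1 (sc p.2)) ->
    e \in ep (g q.1 (wd q.2)) (g q.1 (sc q.2)) -> p = q.
  case: p q => [i j] [i' j'] /= he1 he2.
  have H3 i1 i2 j3 j4 : g i1 j3 = g i2 j4 ->
      (j3 == j4) && [|| i1 == i2, nat_of_ord j3 == 0 | nat_of_ord j3 == l].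
    move=> /eqP; have := h3 i1 => /forallP /(_ i2) /forallP /(_ j3) /forallP /(_ j4).
    by move/implyP.
  case: (ep_mem2 he1 he2) => -[hu hv].
  - move: (H3 _ _ _ _ hu) (H3 _ _ _ _ hv) => /andP[/eqP hj o1] /andP[_ o2].
    have jj : j = j' by apply: val_inj; move: hj => /(congr1 (@nat_of_ord _)); rewrite !wdE.
    subst j'.
    case/or3P: o1 => [/eqP -> // | /eqP k1 | /eqP k1];
    case/or3P: o2 => [/eqP -> // | /eqP k2 | /eqP k2]; exfalso; move: k1 k2;
    rewrite scE wdE => k1 k2; have := ltn_ord j; lia.
  - move: (H3 _ _ _ _ hu) (H3 _ _ _ _ hv) => /andP[/eqP hj _] /andP[/eqP hj' _].
    move: hj hj' => /(congr1 (@nat_of_ord _)) hj /(congr1 (@nat_of_ord _)).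
    rewrite !scE !wdE in hj * => hj'; lia.
have [t0|ht] := posnP t; first by rewrite t0.
pose F (p : 'I_t * 'I_l) := ep (g p.1 (wd p.2)) (g p.1 (sc p.2)).
have nF p : exists e, F p = [set e].
  by have [e [_ he]] := bip_adj_ep (adj p); exists e.
have [e0 _] := nF (i0 ht, Ordinal (ltnW hl)).
pose f p := odflt e0 [pick e in F p].
have fF p : f p \in F p.
  rewrite /f; case: pickP => [x Hx // | H].
  by have [e he] := nF p; have := H e; rewrite /= he set11.
have finj : injective f.
  by move=> p q hpq; apply: (disj p q (f p)); [exact: fF | rewrite hpq; exact: fF].
have -> : t * l = #|f @: [set: 'I_t * 'I_l]|.
  by rewrite card_imset // cardsT card_prod !card_ord.
apply: subset_leq_card; apply/subsetP => e /imsetP [p _ ->].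
by apply/bigcupP; exists p => //; apply: fF.
Qed.
End Edges.

Lemma pat_prod (s : bool) (m n L : nat) :
  \prod_(1 <= k < L.+1) (if s (+) odd k then m else n) =
  (if s then n ^ uphalf L * m ^ L./2 else m ^ uphalf L * n ^ L./2).
Proof.
elim: L => [|L IH]; first by rewrite big_geq //; case: s.
rewrite big_nat_recr //= IH uphalf_half.
move: (L./2) => h; case: s {IH}; case: (odd L) => /=; rewrite ?add0n ?add1n !expnS;
  rewrite ?mulnE; ring.
Qed.

Lemma foldr_prod (I : Type) (s : seq I) (F : I -> nat) :
  foldr muln 1 (map F s) = \prod_(i <- s) F i.
Proof. by elim: s => [|a s IH]; rewrite ?big_nil ?big_cons //= IH. Qed.

Section Count.
Variables (m n t l : nat).
Local Notation V := ('I_m + 'I_n)%type.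
Local Notation T := ('I_m * 'I_n)%type.
Local Notation GT := {ffun 'I_t -> {ffun 'I_l.+1 -> V}}.

Definition is_inl (v : V) : bool := if v is inl _ then true else false.
Definition Lset : {set V} := [set v | is_inl v].
Definition Rset : {set V} := [set v | ~~ is_inl v].

Lemma card_Lset : #|Lset| = m.
Proof.
have -> : Lset = inl @: [set: 'I_m].
  apply/setP => v; rewrite inE; apply/idP/imsetP.
    by case: v => // a _; exists a.
  by case=> a _ ->.
rewrite card_imset; first by rewrite cardsT card_ord.
by move=> a b h; injection h.
Qed.

Lemma card_Rset : #|Rset| = n.
Proof.
have -> : Rset = inr @: [set: 'I_n].
  apply/setP => v; rewrite inE; apply/idP/imsetP.
    by case: v => // b _; exists b.
  by case=> b _ ->.
rewrite card_imset; first by rewrite cardsT card_ord.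
by move=> a b h; injection h.
Qed.

Definition side (x : V) (k : nat) : {set V} :=
  if is_inl x (+) odd k then Lset else Rset.

Definition Cxy (x y : V) (j : 'I_l.+1) : {set V} :=
  if nat_of_ord j == 0 then [set x] else if nat_of_ord j == l then [set y] else side x j.

Lemma adj_side (E : {set T}) u v : bip_adj E u v -> is_inl u = ~~ is_inl v.
Proof. by case: u; case: v. Qed.

Lemma parity (g : GT) : g \in copies t l setT ->
  forall i (j : 'I_l.+1), is_inl (g i j) = is_inl (g i ord0) (+) odd j.
Proof.
rewrite inE => /and3P[_ /forallP h2 _] i j.
suff H : forall k, k <= l -> is_inl (g i (inord k)) = is_inl (g i ord0) (+) odd k.
  by rewrite -H ?inord_val // -ltnS.
elim=> [_|k IH hk].
  by rewrite addbF; congr (is_inl (g i _)); apply: val_inj; rewrite /= inordK.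
have hk' : k <= l by apply: ltnW.
have := h2 i => /forallP /(_ (inord k.+1)) /forallP /(_ (inord k)) /implyP.
move=> /(_ _) /adj_side hu.
  rewrite -[is_inl (g i (inord k.+1))]negbK -hu.
  by apply: (etrans (congr1 negb (IH (ltnW hk)))); rewrite /= addbN.
apply/eqP; change ((nat_of_ord (@inord l k)).+1 = nat_of_ord (@inord l k.+1)).
by rewrite !inordK // ltnS.
Qed.
Lemma leq_expr a b e : a <= b -> a ^ e <= b ^ e.
Proof. by move=> h; elim: e => // e IH; rewrite !expnS leq_mul. Qed.

Hypotheses (ht : 0 < t) (hl : 1 < l) (hmn : m <= n).

Definition Dx (x : V) (k : nat) : nat :=
  if (k == 0) || (k == l) then 1 else if is_inl x (+) odd k then m else n.

Lemma prod_Cxy x y :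
  \prod_(j : 'I_l.+1) #|Cxy x y j| <= n ^ l./2 * m ^ (l.-1)./2.
Proof.
rewrite (eq_bigr (fun j : 'I_l.+1 => Dx x j)); last first.
  move=> j _; rewrite /Cxy /Dx; case: eqP => _; first by rewrite cards1.
  case: eqP => _; first by rewrite cards1.
  by rewrite /side; case: ifP => _; rewrite ?card_Lset ?card_Rset.
rewrite -(big_mkord xpredT (Dx x)) big_nat_recr //= big_ltn; last by apply: ltnW.
have d0 : Dx x 0 = 1 by []. have dl : Dx x l = 1 by rewrite /Dx eqxx orbT.
rewrite d0 dl mul1n muln1.
have -> : \prod_(1 <= k < l) Dx x k =
          \prod_(1 <= k < (l.-1).+1) (if is_inl x (+) odd k then m else n).
  rewrite prednK; last by apply: ltnW.
  apply: eq_big_nat => k /andP[k1 kl]; rewrite /Dx.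
  by have -> : (k == 0) || (k == l) = false by apply/negP => /orP[/eqP|/eqP]; lia.
rewrite pat_prod uphalfE prednK; last by apply: ltnW.
case: (is_inl x) => //.
rewrite -[in X in _ <= X](@subnK (l.-1)./2 l./2); last first.
  by rewrite -{2}(prednK (ltnW hl)) /= uphalf_half leq_addl.
rewrite -[in X in X <= _](@subnK (l.-1)./2 l./2); last first.
  by rewrite -{2}(prednK (ltnW hl)) /= uphalf_half leq_addl.
rewrite !expnD mulnC mulnA leq_mul2r; apply/orP; right.
by rewrite mulnC leq_mul // leq_expr.
Qed.

Lemma card_valid :
  #|copies t l [set: T]| <= (m + n) ^ 2 * (n ^ l./2 * m ^ (l.-1)./2) ^ t.
Proof.
set B := n ^ l./2 * m ^ (l.-1)./2.
pose Fam (xy : V * V) :=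
  [set g : GT | [forall i, g i \in family (Cxy xy.1 xy.2)]].
have sub : copies t l [set: T] \subset \bigcup_(xy : V * V) Fam xy.
  apply/subsetP => g hg; apply/bigcupP.
  exists (g (i0 ht) ord0, g (i0 ht) ord_max) => //.
  have hg' := hg; rewrite inE in hg'; case/and3P: hg' => /forallP h1 _ _.
  rewrite inE; apply/forallP => i; apply/familyP => j; rewrite /Cxy /=.
  have /forallP /(_ (i0 ht)) /andP[/eqP e0 /eqP el] := h1 i.
  case: ifP => [/eqP j0 | _].
    have -> : j = ord0 by apply: val_inj.
    by rewrite e0 inE.
  case: ifP => [/eqP jl | _].
    have -> : j = ord_max by apply: val_inj.
    by rewrite el inE.
  rewrite /side -e0 -(parity hg).
  by move: (g i j) => v; case: v => a; rewrite /= inE.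
apply: leq_trans (subset_leq_card sub) _.
apply: leq_trans (card_bigcup_le _ _) _.
have cF xy : #|Fam xy| <= B ^ t.
  have -> : #|Fam xy| = #|ffun_on_mem 'I_t (mem (family (Cxy xy.1 xy.2)))|.
    apply: eq_card => g; rewrite inE; apply/forallP/ffun_onP => h x; exact: h.
  rewrite card_ffun_on card_ord; apply: leq_expr.
  rewrite card_family /image_mem foldr_prod big_enum /=.
  exact: prod_Cxy.
apply: (@leq_trans (\sum_(xy : V * V) B ^ t)); first by apply: leq_sum => xy _; exact: cF.
by rewrite sum_nat_const card_prod card_sum !card_ord.
Qed.
End Count.

Lemma bin_bound N k s : s <= k -> k <= N -> 'C(N - s, k - s) * N ^ s <= 'C(N, k) * k ^ s.
Proof.
move=> + kN; elim: s => [|s IH] hs; first by rewrite !subn0 !expn0.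
have IH' := IH (ltnW hs).
have id : (N - s) * 'C(N - s.+1, k - s.+1) = (k - s) * 'C(N - s, k - s).
  have := mul_bin_diag (N - s) (k - s.+1).
  have -> : (N - s).-1 = N - s.+1 by lia.
  by have -> : (k - s.+1).+1 = k - s by lia.
have hNs : 0 < N - s by lia.
rewrite -(leq_pmul2l hNs).
set A := 'C(N - s.+1, k - s.+1); set Bc := 'C(N - s, k - s); set C := 'C(N, k).
set X := N ^ s; set Y := k ^ s.
have e1 : (N - s) * (A * N ^ s.+1) = N * (k - s) * (Bc * X) by rewrite expnS mulnA id; lia.
have e2 : (N - s) * (C * k ^ s.+1) = (N - s) * k * (C * Y) by rewrite expnS; lia.
rewrite e1 e2; apply: leq_mul => //.
nia.
Qed.

Lemma card_super (T : finType) (S : {set T}) k : #|S| <= k ->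
  #|[set E : {set T} | #|E| == k & S \subset E]| <= 'C(#|T| - #|S|, k - #|S|).
Proof.
move=> hS.
set P := [set E : {set T} | #|E| == k & S \subset E].
rewrite (cardsCs S) subKn; last by rewrite -(cardsC S) leq_addl.
rewrite -cards_draws.
have inj : {in P &, injective (fun E => E :\: S)}.
  move=> E1 E2; rewrite !inE => /andP[_ s1] /andP[_ s2] h.
  by rewrite -(setID E1 S) -(setID E2 S) h (setIidPr s1) (setIidPr s2).
rewrite -(card_in_imset inj); apply: subset_leq_card.
apply/subsetP => D /imsetP [E]; rewrite /P inE => /andP[/eqP hE sE] ->.
rewrite inE subsetDr /= cardsD (setIidPr sE) hE.
by rewrite -(cardsCs S) eqxx.
Qed.

Lemma avg (I : finType) (D : {set I}) (f : I -> nat) X :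
  0 < #|D| -> \sum_(E in D) f E <= X * #|D| -> exists2 E, E \in D & f E <= X.
Proof.
move=> hD hs; case: (pickP [pred E in D | f E <= X]) => [E /andP[h1 h2] | H].
  by exists E.
exfalso; have : \sum_(E in D) X.+1 <= \sum_(E in D) f E.
  apply: leq_sum => E ED; have := H E; rewrite /= ED /= => /negbT.
  by rewrite -ltnNge.
rewrite sum_nat_const => h; have := leq_trans h hs; nia.
Qed.

Lemma card_sep (I : finType) (A : {set I}) (P : pred I) :
  #|[set x in A | P x]| = \sum_(x in A) P x.
Proof.
rewrite -sum1_card big_mkcond /= [RHS]big_mkcond /=; apply: eq_bigr => x _.
by rewrite inE; case: (x \in A); case: (P x).
Qed.

Theorem core (m n t l k : nat) :
  0 < m -> 0 < n -> 0 < t -> 1 < l -> m <= n -> k <= m * n ->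
  2 * ((m + n) ^ 2 * (n ^ l./2 * m ^ (l.-1)./2) ^ t) * k ^ (t * l).-1
    <= (m * n) ^ (t * l) ->
  k <= 2 * z_theta m n t l.
Proof.
move=> hm hn ht hl hmn kN hcond.
set s0 := t * l.
have s0pos : 0 < s0 by rewrite muln_gt0 ht; apply: ltnW.
set N := m * n.
have Npos : 0 < N by rewrite muln_gt0 hm.
have cardT : #|{: 'I_m * 'I_n}| = N by rewrite card_prod !card_ord.
set G := #|copies t l [set: 'I_m * 'I_n]|.
have hG : G <= (m + n) ^ 2 * (n ^ l./2 * m ^ (l.-1)./2) ^ t := card_valid ht hl hmn.
pose D := [set E : {set 'I_m * 'I_n} | #|E| == k].
have cD : #|D| = 'C(N, k) by rewrite card_draws cardT.
have per g : g \in copies t l [set: 'I_m * 'I_n] ->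
    #|[set E : {set 'I_m * 'I_n} | #|E| == k & Sg g \subset E]| * N ^ s0
      <= 'C(N, k) * k ^ s0.
  move=> hg; have hs := card_Sg hl hg.
  case: (leqP #|Sg g| k) => hk; last first.
    have -> : [set E : {set 'I_m * 'I_n} | #|E| == k & Sg g \subset E] = set0.
      apply/setP => E; rewrite !inE; apply/negbTE/andP => -[/eqP hE /subset_leq_card].
      lia.
    by rewrite cards0.
  have := card_super hk; rewrite cardT => hc.
  have hb := bin_bound hk kN.
  set c := #|[set E : {set 'I_m * 'I_n} | #|E| == k & Sg g \subset E]| in hc *.
  move: hb hc hs; set s := #|Sg g| => hb hc hs.
  have e1 : s = s0 + (s - s0) by rewrite subnKC.
  have hc2 : c * N ^ s <= 'C(N, k) * k ^ s.
    apply: leq_trans hb; rewrite leq_mul2r hc orbT //.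
  move: hc2; rewrite e1 !expnD => hc2.
  have hkd : k ^ (s - s0) <= N ^ (s - s0) by apply: leq_expr.
  have hNd : 0 < N ^ (s - s0) by rewrite expn_gt0 Npos.
  rewrite -(leq_pmul2r hNd); apply: leq_trans; first by rewrite -mulnA; exact: hc2.
  by rewrite -!mulnA leq_mul2l leq_mul2l hkd !orbT.
have sum : \sum_(E in D) (#|copies t l E| * N ^ s0) <= (G * k ^ s0) * #|D|.
  under eq_bigr => E _ do rewrite copiesE card_sep big_distrl /=.
  rewrite exchange_big /=.
  apply: leq_trans (_ : \sum_(g in copies t l [set: 'I_m * 'I_n]) ('C(N, k) * k ^ s0) <= _).
    apply: leq_sum => g hg; rewrite -big_distrl /= -card_sep.
    apply: leq_trans (per g hg); rewrite leq_mul2r; apply/orP; right.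
    apply: subset_leq_card; apply/subsetP => E; rewrite !inE.
    by [].
  by rewrite sum_nat_const cD -/G; lia.
have [E ED hE] := avg (X := G * k ^ s0) (f := fun E => #|copies t l E| * N ^ s0)
  (D := D) (ltac:(by rewrite cD bin_gt0)) sum.
have h2 : 2 * #|copies t l E| <= k.
  have hNs : 0 < N ^ s0 by rewrite expn_gt0 Npos.
  rewrite -(leq_pmul2r hNs).
  set cE := #|copies t l E| in hE *.
  set Bd := (m + n) ^ 2 * (n ^ l./2 * m ^ (l.-1)./2) ^ t in hG hcond.
  have hK : k ^ s0 = k ^ s0.-1 * k by rewrite -expnSr prednK.
  rewrite hK in hE.
  have hc' : 2 * Bd * k ^ s0.-1 <= N ^ s0 by [].
  apply: (@leq_trans (2 * (G * (k ^ s0.-1 * k)))).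
    by rewrite -mulnA leq_mul2l hE orbT.
  apply: (@leq_trans (2 * (Bd * (k ^ s0.-1 * k)))).
    by rewrite leq_mul2l leq_mul2r hG !orbT.
  apply: (@leq_trans ((2 * Bd * k ^ s0.-1) * k)); first by rewrite !mulnA.
  by rewrite [k * _]mulnC leq_mul2r hc' orbT.
have hl0 : 0 < l by apply: ltnW.
have := deletion ht hl0 E; move: ED; rewrite inE => /eqP ->.
lia.
Qed.

Local Open Scope R_scope.

Lemma INR_muln a b : INR (a * b)%N = INR a * INR b.
Proof. by rewrite mulnE mult_INR. Qed.
Lemma INR_addn a b : INR (a + b)%N = INR a + INR b.
Proof. by rewrite addnE plus_INR. Qed.
Lemma INR_expn a k : INR (a ^ k)%N = INR a ^ k.
Proof. elim: k => [|k IH] //=; by rewrite expnS INR_muln IH. Qed.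

Lemma leR_INR a b : INR a <= INR b -> (a <= b)%N.
Proof. by move=> h; apply/leP; apply: INR_le. Qed.
Lemma INR_leR a b : (a <= b)%N -> INR a <= INR b.
Proof. by move=> /leP h; apply: le_INR. Qed.

Lemma pow_exp y k : exp y ^ k = exp (INR k * y).
Proof.
elim: k => [|k IH]; first by rewrite /= Rmult_0_l exp_0.
rewrite S_INR [exp y ^ k.+1]/= IH -exp_plus; congr exp; ring.
Qed.

Lemma floorR x : 0 <= x -> exists k : nat, INR k <= x < INR k + 1.
Proof.
move=> hx; have [h1 h2] := archimed x.
have hu : (0 < up x)%Z by apply: lt_IZR; lra.
exists (Z.to_nat (up x - 1)).
rewrite INR_IZR_INZ Z2Nat.id; last by lia.
rewrite minus_IZR; lra.
Qed.

Lemma zlow (m n t l : nat) (x : R) :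
  (0 < m)%N -> (0 < n)%N -> (0 < t)%N -> (1 < l)%N -> (m <= n)%N -> 0 <= x ->
  2 * (2 * INR n) ^ 2 * (INR n ^ (l./2) * INR m ^ ((l.-1)./2)) ^ t * x ^ ((t * l).-1)
    <= (INR m * INR n) ^ (t * l) ->
  Rmin x (INR m * INR n) <= 4 * INR (z_theta m n t l).
Proof.
move=> hm hn ht hl hmn hx hc.
have [k [hk1 hk2]] := floorR hx.
have mR : 1 <= INR m by apply: (INR_leR hm).
have nR : 1 <= INR n by apply: (INR_leR hn).
have mnR : INR m <= INR n by apply: INR_leR.
case: (posnP k) => [k0 | kpos].
  have z1 := INR_leR (z_ge1 hm hn ht hl).
  rewrite k0 /= in hk2; rewrite /= in z1.
  have := Rmin_l x (INR m * INR n); lra.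
set k' := minn k (m * n).
have k'N : (k' <= m * n)%N := geq_minr _ _.
have hk'x : INR k' <= x by apply: Rle_trans (INR_leR (geq_minl _ _)) hk1.
have hcore : (2 * ((m + n) ^ 2 * (n ^ l./2 * m ^ (l.-1)./2) ^ t) * k' ^ (t * l).-1
    <= (m * n) ^ (t * l))%N.
  apply: leR_INR; rewrite !INR_muln !INR_expn !INR_muln !INR_expn INR_addn.
  apply: Rle_trans hc.
  have h0 : 0 <= INR k' := pos_INR _.
  have p1 : (INR m + INR n) ^ 2 <= (2 * INR n) ^ 2 by apply: pow_incr; lra.
  have p2 : INR k' ^ (t * l).-1 <= x ^ (t * l).-1 by apply: pow_incr; lra.
  have p3 : 0 <= (INR n ^ l./2 * INR m ^ (l.-1)./2) ^ t.
    apply: pow_le; apply: Rmult_le_pos; apply: pow_le; lra.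
  have p4 : 0 <= INR k' ^ (t * l).-1 by apply: pow_le.
  have p5 : 0 <= (INR m + INR n) ^ 2 by apply: pow_le; lra.
  rewrite -[INR 2]/2.
  apply: Rmult_le_compat; try apply: Rmult_le_pos; try apply: Rmult_le_pos; try lra.
  rewrite -Rmult_assoc; apply: Rmult_le_compat_r => //.
  move: p1; rewrite /= !Rmult_1_r; lra.
have := INR_leR (core hm hn ht hl hmn k'N hcore).
rewrite INR_muln -[INR 2]/2 => hz.
suff : Rmin x (INR m * INR n) <= 2 * INR k' by lra.
case: (leqP k (m * n)) => hkN.
  have -> : k' = k by apply/minn_idPl.
  have : 1 <= INR k by apply: (INR_leR kpos).
  have := Rmin_l x (INR m * INR n); lra.
have -> : k' = (m * n)%N by apply/minn_idPr; apply: ltnW.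
rewrite INR_muln.
have := Rmin_r x (INR m * INR n); have : 0 <= INR m * INR n by nra.
lra.
Qed.

Lemma ln_ge0 y : 1 <= y -> 0 <= ln y.
Proof.
move=> h; case: (Rle_lt_or_eq_dec _ _ h) => [h1 | <-]; last by rewrite ln_1; lra.
rewrite -ln_1; left; apply: ln_increasing; lra.
Qed.

Lemma exp_le x y : x <= y -> exp x <= exp y.
Proof.
move=> h; case: (Rle_lt_or_eq_dec _ _ h) => [h1 | ->]; last by right.
by left; apply: exp_increasing.
Qed.

Lemma INR_pred k : (0 < k)%N -> INR k.-1 = INR k - 1.
Proof. by case: k => // k _; rewrite S_INR /=; lra. Qed.

Lemma final_bound (m n t l : nat) (al be : R) :
  (0 < m)%N -> (m <= n)%N -> (0 < t)%N -> (1 < l)%N ->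
  al * (INR t * INR l - 1) <= INR t * INR l - INR t * INR ((l.-1)./2) ->
  be * (INR t * INR l - 1) <= INR t * INR l - INR t * INR (l./2) - 2 ->
  al <= 1 -> be <= 1 ->
  / 32 * Rpower (INR m) al * Rpower (INR n) be <= INR (z_theta m n t l).
Proof.
move=> hm hmn ht hl hal hbe al1 be1.
have hn : (0 < n)%N by apply: leq_trans hmn.
have mR : 1 <= INR m by apply: (INR_leR hm).
have nR : 1 <= INR n by apply: (INR_leR hn).
have mnR : INR m <= INR n by apply: INR_leR.
have tR : 1 <= INR t by apply: (INR_leR ht).
have lR : 2 <= INR l by apply: (INR_leR hl).
set a := ln (INR m); set b := ln (INR n).
have a0 : 0 <= a by apply: ln_ge0.
have b0 : 0 <= b by apply: ln_ge0; lra.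
have eM : INR m = exp a by rewrite /a exp_ln //; lra.
have eN : INR n = exp b by rewrite /b exp_ln //; lra.
set s := INR t * INR l.
have s2 : 2 <= s by rewrite /s; nra.
set A1 := s - INR t * INR ((l.-1)./2).
set A2 := s - INR t * INR (l./2) - 2.
set L8 := ln 8.
have L80 : 0 <= L8 by apply: ln_ge0; lra.
have e8 : 8 = exp L8 by rewrite /L8 exp_ln //; lra.
set x := exp ((A1 * a + A2 * b - L8) / (s - 1)).
have hS : INR (t * l)%N = s by rewrite INR_muln.
have hS1 : INR (t * l).-1 = s - 1.
  by rewrite INR_pred ?hS // muln_gt0 ht; apply: ltnW.
have hz := zlow hm hn ht hl hmn (Rlt_le _ _ (exp_pos _) : 0 <= x).
have hcond : 2 * (2 * INR n) ^ 2 * (INR n ^ (l./2) * INR m ^ ((l.-1)./2)) ^ t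
      * x ^ ((t * l).-1) <= (INR m * INR n) ^ (t * l).
  apply: Req_le.
  have -> : 2 * (2 * INR n) ^ 2 = 8 * INR n ^ 2 by ring.
  rewrite e8 eM eN /x -!exp_plus !pow_exp -!exp_plus pow_exp -!exp_plus.
  congr exp; rewrite hS1 hS (_ : INR 2 = 2); last by rewrite /=; lra.
  rewrite /A1 /A2; field; lra.
have := hz hcond => {}hz.
have E : / 32 * Rpower (INR m) al * Rpower (INR n) be = / 32 * exp (al * a + be * b).
  by rewrite /Rpower -/a -/b Rmult_assoc -exp_plus.
rewrite E.
suff : exp (al * a + be * b) <= 8 * Rmin x (INR m * INR n) by lra.
have h8 : 8 * Rmin x (INR m * INR n) = Rmin (8 * x) (8 * (INR m * INR n)).
  rewrite /Rmin; case: Rle_dec; case: Rle_dec => //; lra.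
rewrite h8; apply: Rmin_glb.
  rewrite {1}e8 /x -exp_plus; apply: exp_le.
  apply: (Rmult_le_reg_r (s - 1)); first lra.
  have -> : (L8 + (A1 * a + A2 * b - L8) / (s - 1)) * (s - 1)
      = L8 * (s - 1) + A1 * a + A2 * b - L8 by field; lra.
  have k1 : al * a * (s - 1) <= A1 * a.
    have := Rmult_le_compat_r a _ _ a0 hal; rewrite /A1 /s; lra.
  have k2 : be * b * (s - 1) <= A2 * b.
    have := Rmult_le_compat_r b _ _ b0 hbe; rewrite /A2 /s; lra.
  nra.
rewrite {1}e8 eM eN -!exp_plus; apply: exp_le; nra.
Qed.

Theorem mainTheorem9 (eps : R) (l : nat) :
  0 < eps -> (2 <= l)%N ->
  exists t0 : nat, forall t : nat, (t0 <= t)%N ->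
    exists c : R, 0 < c /\
      forall m n : nat, (0 < m)%N -> (m <= n)%N ->
        if odd l then
          c * Rpower (INR m) ((INR l + 1) / (2 * INR l) - eps)
            * Rpower (INR n) ((INR l + 1) / (2 * INR l) - eps)
          <= INR (z_theta m n t l)
        else
          c * Rpower (INR m) (1 / 2 + 1 / INR l - eps)
            * Rpower (INR n) (1 / 2 - eps)
          <= INR (z_theta m n t l).
Proof.
move=> heps hl.
have [u1 u2] := archimed (2 / eps).
have hu : (0 < up (2 / eps))%Z.
  apply: lt_IZR; have : 0 < 2 / eps by apply: Rdiv_lt_0_compat; lra.
  lra.
exists (Z.to_nat (up (2 / eps))).+1 => t ht0.
have ht : (0 < t)%N by apply: leq_trans ht0.
have tR : 2 / eps < INR t.
  have := INR_leR ht0; rewrite S_INR INR_IZR_INZ Z2Nat.id; last by lia.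
  lra.
have teps : 2 < INR t * eps.
  have := Rmult_lt_compat_r eps _ _ heps tR.
  by rewrite /Rdiv Rmult_assoc Rinv_l; lra.
have t1 : 1 <= INR t by apply: (INR_leR ht).
exists (/ 32); split; first lra.
move=> m n hm hmn.
have hdh := odd_double_half l.
set h := l./2 in hdh *.
have lR : 2 <= INR l by apply: (INR_leR hl).
case: ifP => hodd.
- rewrite hodd /= in hdh.
  have hl1 : (l.-1)./2 = h by rewrite -hdh /= -{2}(doubleK h).
  have lE : INR l = 2 * INR h + 1.
    by rewrite -hdh add1n S_INR -mul2n INR_muln /=; lra.
  set q := (INR l + 1) / (2 * INR l).
  have hq : q * (2 * INR l) = INR l + 1 by rewrite /q; field; lra.
  have hH : 1 <= INR h.
    have : (1 <= h)%N by move: hdh hl; rewrite -mul2n; lia.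
    by move=> /INR_leR.
  have qL : q * INR l = (INR l + 1) / 2 by lra.
  have q0 : 0 <= q.
    by rewrite /q; apply: Rlt_le; apply: Rdiv_lt_0_compat; lra.
  have q1 : q <= 1.
    rewrite /q; apply: (Rmult_le_reg_r (2 * INR l)); first lra.
    rewrite /Rdiv Rmult_assoc Rinv_l; lra.
  have e1 : 2 * (INR t * eps) <= eps * (INR t * INR l - 1).
    have : 0 <= eps * (INR t * INR l - 1 - 2 * INR t).
      apply: Rmult_le_pos; lra || nra.
    lra.
  have qTL : q * (INR t * INR l) = INR t * INR h + INR t.
    have -> : q * (INR t * INR l) = INR t * (q * INR l) by ring.
    rewrite qL lE; field.
  have cond2 : (q - eps) * (INR t * INR l - 1) <= INR t * INR l - INR t * INR h - 2.
    have -> : (q - eps) * (INR t * INR l - 1) = q * (INR t * INR l) - q - eps * (INR t * INR l - 1) by ring.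
    have TLe : INR t * INR l = 2 * (INR t * INR h) + INR t by rewrite lE; ring.
    rewrite qTL; lra.
  by apply: final_bound => //; rewrite ?hl1 -/h -/q; lra.
- rewrite hodd /= in hdh.
  have hH1 : (1 <= h)%N by move: hdh hl; rewrite -mul2n; lia.
  have hl1 : (l.-1)./2 = h.-1.
    rewrite -hdh add0n; case: (h) hH1 => // h' _.
    by rewrite doubleS /= uphalf_double.
  have lE : INR l = 2 * INR h by rewrite -hdh add0n -mul2n INR_muln.
  have hH : 1 <= INR h by apply: (INR_leR hH1).
  have hp : INR h.-1 = INR h - 1 by rewrite INR_pred.
  set r := 1 / INR l.
  have rL : r * INR l = 1 by rewrite /r; field; lra.
  have r0 : 0 <= r by rewrite /r; apply: Rlt_le; apply: Rdiv_lt_0_compat; lra.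
  have r1 : r <= 1 / 2 by nra.
  have rTL : r * (INR t * INR l) = INR t.
    have -> : r * (INR t * INR l) = INR t * (r * INR l) by ring.
    by rewrite rL; ring.
  have TLe : INR t * INR l = 2 * (INR t * INR h) by rewrite lE; ring.
  have TH : INR t <= INR t * INR h by nra.
  have e1 : INR t * eps <= eps * (INR t * INR l - 1) by nra.
  have e0 : 0 <= eps * (INR t * INR l - 1) by nra.
  by apply: final_bound => //; rewrite ?hl1 -/h -/r ?hp; lra.
Qed.
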